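(* In the setting below, if $\eta \geq \eta_0$ and an oscillation happens at iteration $t$, then $\hat{w}_t \leq \eta/\gamma$.
   Context: Dimension $d=2$. Data $x_1,\dots,x_n\in\mathbb{R}^2$ with $\|x_i\|\le 1$, linearly separable (some $w$ has $\langle w,x_i\rangle>0$ for all $i$). $F(w) = \frac{1}{n}\sum_{i=1}^n \log(1+\exp(-\langle w, x_i\rangle))$. Maximum margin $\gamma = \max_{\|w\|=1}\min_i \langle w, x_i\rangle$ with maximizer the unit vector $w_*$; $v_*$ is a fixed unit vector orthogonal to $w_*$. Gradient descent: $w_0=0$, $w_{t+1} = w_t - \eta\nabla F(w_t)$ with constant $\eta>0$. $\hat{w}_t = \langle w_t, w_*\rangle$, $\tilde{w}_t = \langle w_t, v_*\rangle$. $\eta_0 = \max(n, \frac{32}{\gamma^2}\log\frac{256}{\gamma^2})$. $\lambda = \frac{1}{\gamma}\log\frac{1}{\exp(1/(8\eta))-1}$. An oscillation happens at iteration $t\ge 0$ if all of: (1) $\hat{w}_t \geq \lambda$; (2) $F(w_t) > 1/(8\eta)$ and $F(w_{t+1}) > 1/(8\eta)$; (3) $\tilde{w}_{t+1}\tilde{w}_t < 0$. *)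

(* Defs.v *)
From Stdlib Require Import Reals Lra.
Open Scope R_scope.

Definition vec2 := (R * R)%type.
Definition dot (u v : vec2) : R := fst u * fst v + snd u * snd v.
Definition norm2 (u : vec2) : R := sqrt (dot u u).
Definition vadd (u v : vec2) : vec2 := (fst u + fst v, snd u + snd v).
Definition vscale (a : R) (u : vec2) : vec2 := (a * fst u, a * snd u).

Fixpoint sumR (n : nat) (f : nat -> R) : R :=
  match n with O => 0 | S k => sumR k f + f k end.
Fixpoint vsum (n : nat) (f : nat -> vec2) : vec2 :=
  match n with O => (0, 0) | S k => vadd (vsum k f) (f k) end.

(* minimum over i < n of f i (n >= 1 in use) *)
Fixpoint minR (n : nat) (f : nat -> R) : R :=
  match n with
  | O => 0
  | S O => f O
  | S k => Rmin (minR k f) (f k)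
  end.

Definition F (n : nat) (x : nat -> vec2) (w : vec2) : R :=
  / INR n * sumR n (fun i => ln (1 + exp (- dot w (x i)))).

Definition gradF (n : nat) (x : nat -> vec2) (w : vec2) : vec2 :=
  vscale (- / INR n) (vsum n (fun i => vscale (/ (1 + exp (dot w (x i)))) (x i))).

Fixpoint gd (n : nat) (x : nat -> vec2) (eta : R) (t : nat) : vec2 :=
  match t with
  | O => (0, 0)
  | S k => let w := gd n x eta k in vadd w (vscale (- eta) (gradF n x w))
  end.

Definition margin (n : nat) (x : nat -> vec2) (w : vec2) : R :=
  minR n (fun i => dot w (x i)).

Definition is_max_margin (n : nat) (x : nat -> vec2) (gamma : R) (wstar : vec2) : Prop :=
  norm2 wstar = 1 /\ margin n x wstar = gamma /\
  (forall w, norm2 w = 1 -> margin n x w <= gamma).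

Definition lin_separable (n : nat) (x : nat -> vec2) : Prop :=
  exists w, forall i, (i < n)%nat -> dot w (x i) > 0.

Definition eta0 (n : nat) (gamma : R) : R :=
  Rmax (INR n) (32 / gamma ^ 2 * ln (256 / gamma ^ 2)).

Definition lambda (gamma eta : R) : R :=
  / gamma * ln (/ (exp (/ (8 * eta)) - 1)).

Definition oscillation (n : nat) (x : nat -> vec2) (eta gamma : R)
    (wstar vstar : vec2) (t : nat) : Prop :=
  let wt := gd n x eta t in
  let wt1 := gd n x eta (S t) in
  dot wt wstar >= lambda gamma eta /\
  F n x wt > / (8 * eta) /\ F n x wt1 > / (8 * eta) /\
  dot wt1 vstar * dot wt vstar < 0.

(* Main.v *)
Require Import Defs.
From Stdlib Require Import Reals Lra Lia Psatz.
Open Scope R_scope.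

Lemma ln_le' : forall a b, 0 < a -> a <= b -> ln a <= ln b.
Proof.
  intros a b Ha Hab. destruct (Rle_lt_or_eq_dec a b Hab) as [H|H].
  - left; apply ln_increasing; auto.
  - subst; lra.
Qed.

Lemma dot_comm u v : dot u v = dot v u.
Proof. unfold dot; ring. Qed.

Lemma dot_vscale_l a u v : dot (vscale a u) v = a * dot u v.
Proof. unfold dot, vscale; simpl; ring. Qed.

Lemma dot_vadd_l u w v : dot (vadd u w) v = dot u v + dot w v.
Proof. unfold dot, vadd; simpl; ring. Qed.

Lemma sumR_ext n f g : (forall i, f i = g i) -> sumR n f = sumR n g.
Proof. intros H; induction n; simpl; auto. rewrite IHn, H; auto. Qed.

Lemma dot_vsum_l n f v : dot (vsum n f) v = sumR n (fun i => dot (f i) v).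
Proof.
  induction n; simpl.
  - unfold dot; simpl; ring.
  - rewrite dot_vadd_l, IHn; auto.
Qed.

Lemma gd_S_dot n x eta t v :
  dot (gd n x eta (S t)) v = dot (gd n x eta t) v +
    eta * / INR n * sumR n (fun i => / (1 + exp (dot (gd n x eta t) (x i))) * dot (x i) v).
Proof.
  change (gd n x eta (S t)) with
    (vadd (gd n x eta t) (vscale (-eta) (gradF n x (gd n x eta t)))).
  rewrite dot_vadd_l, dot_vscale_l. unfold gradF. rewrite dot_vscale_l, dot_vsum_l.
  rewrite (sumR_ext n _ (fun i => / (1 + exp (dot (gd n x eta t) (x i))) * dot (x i) v)).
  - ring.
  - intros i; rewrite dot_vscale_l; auto.
Qed.

Lemma minR_le n f i : (i < n)%nat -> minR n f <= f i.
Proof.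
  revert i. induction n; intros i Hi; [lia|].
  destruct n.
  - simpl. assert (i = 0%nat) by lia. subst; lra.
  - change (minR (S (S n)) f) with (Rmin (minR (S n) f) (f (S n))).
    destruct (Nat.eq_dec i (S n)).
    + subst. apply Rmin_r.
    + eapply Rle_trans; [apply Rmin_l|]. apply IHn; lia.
Qed.

Lemma minR_att n f : (0 < n)%nat -> exists i, (i < n)%nat /\ minR n f = f i.
Proof.
  induction n; intros Hn; [lia|].
  destruct n.
  - exists 0%nat; split; [lia|]; reflexivity.
  - change (minR (S (S n)) f) with (Rmin (minR (S n) f) (f (S n))).
    unfold Rmin. destruct (Rle_dec (minR (S n) f) (f (S n))).
    + destruct IHn as [i [Hi Hm]]; [lia|]. exists i; split; [lia|auto].
    + exists (S n); split; [lia|auto].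
Qed.

Lemma sumR_nonneg n f : (forall i, (i < n)%nat -> 0 <= f i) -> 0 <= sumR n f.
Proof.
  induction n; intros H; simpl; [lra|].
  assert (0 <= sumR n f) by (apply IHn; intros; apply H; lia).
  assert (0 <= f n) by (apply H; lia). lra.
Qed.

Lemma sumR_bound n f : (forall i, (i < n)%nat -> -1 < f i < 1) -> (0 < n)%nat ->
  - INR n < sumR n f < INR n.
Proof.
  induction n; intros H Hn; [lia|].
  simpl sumR. rewrite S_INR.
  assert (-1 < f n < 1) by (apply H; lia).
  destruct n.
  - simpl. lra.
  - assert (- INR (S n) < sumR (S n) f < INR (S n)) by (apply IHn; [intros; apply H; lia| lia]).
    lra.
Qed.

Lemma sumR_exists n g c : sumR n g > INR n * c -> exists i, (i < n)%nat /\ g i > c.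
Proof.
  induction n; intros H.
  - simpl in H; lra.
  - change (sumR (S n) g) with (sumR n g + g n) in H.
    destruct (Rlt_le_dec c (g n)).
    + exists n; split; [lia|lra].
    + destruct IHn as [i [Hi Hg]].
      * rewrite S_INR in H. lra.
      * exists i; split; [lia|auto].
Qed.

Lemma dot_self_nonneg u : 0 <= dot u u.
Proof. unfold dot; nra. Qed.

Lemma norm1_dot u : norm2 u = 1 -> dot u u = 1.
Proof.
  unfold norm2; intros H. rewrite <- (sqrt_sqrt (dot u u)) by apply dot_self_nonneg.
  rewrite H; ring.
Qed.

Lemma norm_le1_dot u : norm2 u <= 1 -> dot u u <= 1.
Proof.
  unfold norm2; intros H. rewrite <- (sqrt_sqrt (dot u u)) by apply dot_self_nonneg.
  pose proof (sqrt_pos (dot u u)). nra.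
Qed.

Lemma decomp (ws vs : vec2) : dot ws ws = 1 -> dot vs vs = 1 -> dot vs ws = 0 ->
  forall u y, dot u y = dot u ws * dot y ws + dot u vs * dot y vs.
Proof.
  destruct ws as [p q], vs as [r s]. unfold dot; simpl. intros H1 H2 H3 u y.
  set (d := p * s - q * r).
  assert (Hd : d * d = 1).
  { assert (E: d * d = (p*p+q*q)*(r*r+s*s) - (r*p+s*q)*(r*p+s*q)) by (unfold d; ring).
    rewrite E, H1, H2, H3. ring. }
  assert (Hr : r = - q * d).
  { assert (E: r * (p*p+q*q) = p*(r*p+s*q) - q*d) by (unfold d; ring).
    rewrite H1, H3 in E. lra. }
  assert (Hs : s = p * d).
  { assert (E: s * (p*p+q*q) = q*(r*p+s*q) + p*d) by (unfold d; ring).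
    rewrite H1, H3 in E. lra. }
  rewrite Hr, Hs. destruct u as [u1 u2], y as [y1 y2]; simpl.
  assert (E: (u1 * p + u2 * q) * (y1 * p + y2 * q) +
    (u1 * (- q * d) + u2 * (p * d)) * (y1 * (- q * d) + y2 * (p * d)) - (u1*y1+u2*y2)
    = (p*p+q*q-1)*(u1*y1+u2*y2) + (d*d-1)*(u1*y1*q*q + u2*y2*p*p - (u1*y2+u2*y1)*p*q))
    by ring.
  replace (p*p+q*q-1) with 0 in E by lra.
  replace (d*d-1) with 0 in E by lra.
  lra.
Qed.

Theorem lemma4 (n : nat) (x : nat -> vec2) (gamma : R) (wstar vstar : vec2)
    (eta : R) (t : nat) :
  (0 < n)%nat ->
  (forall i, (i < n)%nat -> norm2 (x i) <= 1) ->
  lin_separable n x ->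
  is_max_margin n x gamma wstar ->
  norm2 vstar = 1 -> dot vstar wstar = 0 ->
  0 < eta -> eta >= eta0 n gamma ->
  oscillation n x eta gamma wstar vstar t ->
  dot (gd n x eta t) wstar <= eta / gamma.
Proof.
  intros Hn Hx Hsep [Hw1 [Hmarg Hmax]] Hv1 Hvw Heta Heta0 Ho.
  unfold oscillation in Ho. destruct Ho as [Ho1 [Ho2 [Ho3 Ho4]]].
  set (w0 := gd n x eta t) in *. set (w1 := gd n x eta (S t)) in *.
  assert (Dw := norm1_dot _ Hw1). assert (Dv := norm1_dot _ Hv1).
  assert (Hdec := decomp wstar vstar Dw Dv Hvw).
  assert (Ha : forall i, (i < n)%nat -> gamma <= dot (x i) wstar).
  { intros i Hi. rewrite <- Hmarg. unfold margin. rewrite dot_comm.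
    apply (minR_le n (fun i => dot wstar (x i))); auto. }
  assert (Hab : forall i, (i < n)%nat -> dot (x i) wstar * dot (x i) wstar + dot (x i) vstar * dot (x i) vstar <= 1).
  { intros i Hi. rewrite <- Hdec. apply norm_le1_dot; auto. }
  assert (Hg1 : gamma <= 1).
  { pose proof (Ha 0%nat Hn). pose proof (Hab 0%nat Hn). nra. }
  assert (Hg0 : 0 < gamma).
  { destruct Hsep as [w Hw].
    assert (Hx0 := Hw 0%nat Hn).
    assert (Hww : 0 < dot w w).
    { destruct w as [z1 z2]; destruct (x 0%nat) as [y1 y2]; unfold dot in *; simpl in *.
      destruct (Req_dec z1 0); destruct (Req_dec z2 0); try nra.
      }
    set (nw := norm2 w).
    assert (Hnw : 0 < nw) by (apply sqrt_lt_R0; auto).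
    assert (Hnw2 : nw * nw = dot w w) by (apply sqrt_sqrt; lra).
    set (u := vscale (/ nw) w).
    assert (Hu : norm2 u = 1).
    { unfold norm2, u. rewrite dot_vscale_l, dot_comm, dot_vscale_l.
      replace (/ nw * (/ nw * dot w w)) with 1. apply sqrt_1.
      rewrite <- Hnw2. field. lra. }
    assert (Hm := Hmax u Hu).
    destruct (minR_att n (fun i => dot u (x i)) Hn) as [j [Hj Hmj]].
    unfold margin in Hm. rewrite Hmj in Hm. unfold u in Hm.
    rewrite dot_vscale_l in Hm.
    assert (0 < / nw * dot w (x j)).
    { apply Rmult_lt_0_compat. apply Rinv_0_lt_compat; auto. apply Hw; auto. }
    lra. }
  assert (Heta32 : 32 <= eta).
  { unfold eta0 in Heta0.
    assert (H1 : 32 / gamma ^ 2 * ln (256 / gamma ^ 2) <= eta).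
    { apply Rle_trans with (Rmax (INR n) (32 / gamma ^ 2 * ln (256 / gamma ^ 2))); [apply Rmax_r|]. apply Rge_le; exact Heta0. }
    assert (Hg2 : 0 < gamma ^ 2 <= 1) by (split; nra).
    assert (Hi : 1 <= / gamma ^ 2).
    { rewrite <- Rinv_1. apply Rinv_le_contravar; lra. }
    assert (Hl : 1 <= ln (256 / gamma ^ 2)).
    { rewrite <- (ln_exp 1). apply ln_le'. apply exp_pos.
      pose proof exp_le_3. unfold Rdiv. nra. }
    unfold Rdiv in H1. nra. }
  set (c := / (8 * eta)).
  assert (Hc : 0 < c) by (apply Rinv_0_lt_compat; lra).
  assert (Hec : c < exp c - 1) by (pose proof (exp_ineq1 c); lra).
  set (L := ln (/ (exp c - 1))).
  assert (HL : L < eta / 2).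
  { apply Rlt_le_trans with (ln (8 * eta)).
    - unfold L. apply ln_increasing. apply Rinv_0_lt_compat; lra.
      replace (8 * eta) with (/ c) by (unfold c; rewrite Rinv_inv; auto).
      apply Rinv_lt_contravar; nra.
    - rewrite <- (ln_exp (eta / 2)). apply ln_le'. lra.
      set (y := eta / 8).
      assert (E : exp (eta / 2) = exp y * exp y * exp y * exp y).
      { rewrite <- !exp_plus. f_equal. unfold y; field. }
      rewrite E.
      assert (Hy : y < exp y) by (assert (y <> 0) by (unfold y; lra); pose proof (exp_ineq1 y H); lra).
      assert (Hy4 : 4 <= y) by (unfold y; lra).
      assert (y * y * y * y <= exp y * exp y * exp y * exp y).
      { assert (y*y <= exp y * exp y) by nra. nra. }
      assert (16 <= y * y) by nra. assert (64 <= y * y * y) by nra. assert (64 * y <= y * y * y * y) by nra.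
      unfold y in *. lra. }
  assert (HgL : gamma * lambda gamma eta = L).
  { unfold lambda, L, c. field. lra. }
  assert (HF : forall w, F n x w > c -> exists i, (i < n)%nat /\ dot w (x i) < L).
  { intros w Hw. unfold F in Hw.
    assert (HnR : 0 < INR n) by (apply lt_0_INR; lia).
    assert (Hs : sumR n (fun i => ln (1 + exp (- dot w (x i)))) > INR n * c).
    { set (S := sumR n _) in *.
      replace S with (INR n * (/ INR n * S)) by (field; lra). nra. }
    destruct (sumR_exists _ _ _ Hs) as [i [Hi Hgi]].
    exists i; split; auto.
    assert (H1 : exp c < 1 + exp (- dot w (x i))).
    { rewrite <- (exp_ln (1 + exp (- dot w (x i)))).
      apply exp_increasing; lra. pose proof (exp_pos (- dot w (x i))); lra. }
    assert (H2 : ln (exp c - 1) < - dot w (x i)).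
    { rewrite <- (ln_exp (- dot w (x i))). apply ln_increasing; lra. }
    unfold L. rewrite ln_Rinv by lra. lra. }
  assert (Hlow : forall w, eta < gamma * dot w wstar -> F n x w > c ->
            eta - L < Rabs (dot w vstar)).
  { intros w Hw HFw. destruct (HF w HFw) as [i [Hi Hz]].
    rewrite (Hdec w (x i)) in Hz.
    pose proof (Ha i Hi). pose proof (Hab i Hi).
    set (a := dot (x i) wstar) in *. set (b := dot (x i) vstar) in *.
    set (wh := dot w wstar) in *. set (wt := dot w vstar) in *.
    assert (0 < wh) by nra.
    assert (wh * gamma <= wh * a) by nra.
    assert (Hb : Rabs b <= 1).
    { unfold Rabs; destruct (Rcase_abs b); nra. }
    assert (Rabs (wt * b) <= Rabs wt).
    { rewrite Rabs_mult. pose proof (Rabs_pos wt). pose proof (Rabs_pos b). nra. }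
    assert (- (wt * b) <= Rabs (wt * b)).
    { rewrite <- Rabs_Ropp. apply RRle_abs. }
    lra. }
  assert (Hk : forall i, 0 < / (1 + exp (dot w0 (x i))) < 1).
  { intros i. pose proof (exp_pos (dot w0 (x i))). split.
    apply Rinv_0_lt_compat; lra.
    rewrite <- Rinv_1 at 2. apply Rinv_lt_contravar; lra. }
  assert (HnR : 0 < INR n) by (apply lt_0_INR; lia).
  assert (Hmono : dot w0 wstar <= dot w1 wstar).
  { unfold w1. rewrite gd_S_dot. fold w0.
    assert (0 <= sumR n (fun i => / (1 + exp (dot w0 (x i))) * dot (x i) wstar)).
    { apply sumR_nonneg. intros i Hi. pose proof (Hk i). pose proof (Ha i Hi). nra. }
    assert (0 < eta * / INR n).
    { apply Rmult_lt_0_compat; auto. apply Rinv_0_lt_compat; auto. }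
    nra. }
  assert (Hstep : Rabs (dot w1 vstar - dot w0 vstar) < eta).
  { unfold w1. rewrite gd_S_dot. fold w0.
    set (S := sumR n (fun i => / (1 + exp (dot w0 (x i))) * dot (x i) vstar)).
    assert (HS : - INR n < S < INR n).
    { apply sumR_bound; auto. intros i Hi. pose proof (Hk i). pose proof (Hab i Hi). nra. }
    assert (HS' : -1 < / INR n * S < 1).
    { split.
      - replace (-1) with (/ INR n * (- INR n)) by (field; lra).
        apply Rmult_lt_compat_l. apply Rinv_0_lt_compat; auto. lra.
      - replace 1 with (/ INR n * (INR n)) by (field; lra).
        apply Rmult_lt_compat_l. apply Rinv_0_lt_compat; auto. lra. }
    replace (dot w0 vstar + eta * / INR n * S - dot w0 vstar) with (eta * (/ INR n * S)) by ring.
    rewrite Rabs_mult. rewrite (Rabs_pos_eq eta) by lra.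
    assert (Rabs (/ INR n * S) < 1) by (unfold Rabs; destruct Rcase_abs; lra).
    nra. }
  destruct (Rle_lt_dec (dot w0 wstar) (eta / gamma)) as [H|H]; auto.
  exfalso.
  assert (Hg : eta < gamma * dot w0 wstar).
  { replace eta with (gamma * (eta / gamma)) by (field; lra).
    apply Rmult_lt_compat_l; auto. }
  assert (A0 := Hlow w0 Hg Ho2).
  assert (A1 : eta - L < Rabs (dot w1 vstar)).
  { apply Hlow; auto. nra. }
  revert Ho4 Hstep A0 A1 HL.
  generalize (dot w1 vstar) (dot w0 vstar). intros p q H4 H5 H6 H7 H8.
  unfold Rabs in *. repeat destruct Rcase_abs; nra.
Qed.
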